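(* Let $c\in\mathbb{R}^n$, $A\in\mathbb{R}^{m\times n}$, $b\in\mathbb{R}^m$ and $\emptyset\neq I\subseteq\{1,\dots,n\}$, and consider the binary mixed-integer linear problem $\min\{c^\top x : Ax\ge b,\ x_i\in\{0,1\} \text{ for } i\in I\}$. Let $X:=\{x\in\mathbb{R}^n : Ax\ge b,\ x_I\in[0,1]^I\}\neq\emptyset$, $Y:=\{0,1\}^I$, and consider $$\min_{x,y}\ \|x_I-y\|_1 \quad\text{s.t.}\quad x\in X,\ y\in Y. \qquad (\ast)$$ The idealized feasibility pump is the following method: take $x^0\in\arg\min\{c^\top x: x\in X\}$ and $y^0$ the componentwise rounding of $x^0_I$ to the nearest integer; for $k=0,1,\dots$ compute $x^{k+1}\in\arg\min_{x\in X}\|x_I-y^k\|_1$ (a global minimizer) and $y^{k+1}\in\arg\min_{y\in Y}\|x^{k+1}_I-y\|_1$ (i.e., a rounding of $x^{k+1}_I$), with ties in the $y$-step resolved by choosing the lexicographically minimal minimizer; stop as soon as the current iterate is a partial minimum of $(\ast)$ (no random perturbations are applied). Then the idealized feasibility pump terminates at a partial minimum $(x^*,y^* )$ of $(\ast)$ after a finite number of iterations. If this partial minimum satisfies $\|x^*_I-y^*\|_1=0$, then the point $(x^*,y^* )$ is feasible for the binary mixed-integer linear problem (i.e., $x^*$ is feasible for it).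
   Context: A point $(x^*,y^* )\in X\times Y$ is a partial minimum of $(\ast)$ if $\|x^*_I-y^*\|_1\le\|x_I-y^*\|_1$ for all $x\in X$ and $\|x^*_I-y^*\|_1\le \|x^*_I-y\|_1$ for all $y\in Y$. $x_I$ denotes the subvector of $x$ with components indexed by $I$. *)

(* Defs.v *)
From HB Require Import structures.
From mathcomp Require Import all_boot all_order all_algebra.
From mathcomp Require Import reals.
Set Implicit Arguments. Unset Strict Implicit. Unset Printing Implicit Defensive.
Import Order.TTheory GRing.Theory Num.Theory.
Local Open Scope ring_scope.

Section FP.
Variables (R : realType) (m n : nat).
Variables (A : 'M[R]_(m, n)) (b : 'cV[R]_m) (c : 'cV[R]_n) (I : {set 'I_n}).

Definition Ity := {i : 'I_n | i \in I}.

(* Y = {0,1}^I : binary vectors indexed by I (false = 0, true = 1). *)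
Definition Yvec := {ffun Ity -> bool}.

Definition inX (x : 'cV[R]_n) : Prop :=
  (forall j : 'I_m, b j 0 <= (A *m x) j 0) /\
  (forall i : 'I_n, i \in I -> 0 <= x i 0 <= 1).

Definition obj (x : 'cV[R]_n) : R := \sum_(i < n) c i 0 * x i 0.

Definition dist1 (x : 'cV[R]_n) (y : Yvec) : R :=
  \sum_(i : Ity) `|x (val i) 0 - (y i)%:R|.

Definition milp_feasible (x : 'cV[R]_n) : Prop :=
  (forall j : 'I_m, b j 0 <= (A *m x) j 0) /\
  (forall i : 'I_n, i \in I -> x i 0 = 0 \/ x i 0 = 1).

Definition partial_min (x : 'cV[R]_n) (y : Yvec) : Prop :=
  inX x /\
  (forall x', inX x' -> dist1 x y <= dist1 x' y) /\
  (forall y' : Yvec, dist1 x y <= dist1 x y').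

Definition lex_le (y y' : Yvec) : Prop :=
  y = y' \/
  exists i : Ity, y i = false /\ y' i = true /\
    (forall j : Ity, (val (val j) < val (val i))%N -> y j = y' j).

(* a run of the idealized feasibility pump (without perturbations),
   with the steps performed as long as no partial minimum was reached *)
Definition ifp_run (x : nat -> 'cV[R]_n) (y : nat -> Yvec) : Prop :=
  [/\
      inX (x 0%N) /\ (forall x', inX x' -> obj (x 0%N) <= obj x'),
      (forall i : Ity,
         `|x 0%N (val i) 0 - (y 0%N i)%:R| <= `|x 0%N (val i) 0 - (~~ y 0%N i)%:R|)
    & forall k : nat, (forall j, (j <= k)%N -> ~ partial_min (x j) (y j)) ->
      [/\
          inX (x k.+1),
          (forall x', inX x' -> dist1 (x k.+1) (y k) <= dist1 x' (y k)),
          (forall y' : Yvec, dist1 (x k.+1) (y k.+1) <= dist1 (x k.+1) y')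
        &
          (forall y' : Yvec, dist1 (x k.+1) y' <= dist1 (x k.+1) (y k.+1) ->
             lex_le (y k.+1) y')]].

End FP.

(* Main.v *)
Require Import Defs.
From HB Require Import structures.
From mathcomp Require Import all_boot all_order all_algebra.
From mathcomp Require Import reals.
From Stdlib Require Import Classical.
Import Order.TTheory GRing.Theory Num.Theory.
Local Open Scope ring_scope.

Lemma least_nat (P : nat -> Prop) j : P j ->
  exists K, P K /\ (forall i, (i < K)%N -> ~ P i).
Proof.
elim: j {-2}j (leqnn j) => [|N IH] j hj Pj.
  exists j; split => // i hi; move: hj hi; rewrite leqn0 => /eqP ->.
  by rewrite ltn0.
case: (classic (exists i, (i < j)%N /\ P i)) => [[i [hi Pi]]|nex].
  apply: (IH i) => //; by rewrite -ltnS (leq_trans hi hj).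
exists j; split => // i hi Pi; apply: nex; by exists i.
Qed.

Theorem mainTheorem2 (R : realType) (m n : nat)
    (A : 'M[R]_(m, n)) (b : 'cV[R]_m) (c : 'cV[R]_n) (I : {set 'I_n})
    (x : nat -> 'cV[R]_n) (y : nat -> Yvec I) :
  I != set0 ->
  (exists x0 : 'cV[R]_n, inX A b I x0) ->
  ifp_run A b c x y ->
  exists K : nat,
    (forall j, (j < K)%N -> ~ partial_min A b (x j) (y j)) /\
    partial_min A b (x K) (y K) /\
    (dist1 (x K) (y K) = 0 -> milp_feasible A b I (x K)).
Proof.
move=> _ _ [_ _ run].
have [j Pj] : exists j, partial_min A b (x j) (y j).
  apply: NNPP => H.
  have H' : forall j, ~ partial_min A b (x j) (y j).
    by move=> j Pj; apply: H; exists j.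
  have st : forall k, [/\ inX A b I (x k.+1),
          (forall x', inX A b I x' -> dist1 (x k.+1) (y k) <= dist1 x' (y k)),
          (forall y' : Yvec I, dist1 (x k.+1) (y k.+1) <= dist1 (x k.+1) y')
        & (forall y' : Yvec I, dist1 (x k.+1) y' <= dist1 (x k.+1) (y k.+1) ->
             lex_le (y k.+1) y')].
    by move=> k; apply: run => i _; apply: H'.
  pose a k := dist1 (x k.+1) (y k).
  have adet : forall i k, y i = y k -> a i = a k.
    move=> i k e; have [_ mi _ _] := st i; have [Xk mk _ _] := st k.
    have [Xi _ _ _] := st i.
    apply/le_anti/andP; split; rewrite /a.
      by have := mi _ Xk; rewrite e.
    by have := mk _ Xi; rewrite -e.
  have dec : forall k, a k.+1 < a k.
    move=> k; have [Xk _ myk _] := st k; have [Xk1 mk1 _ _] := st k.+1.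
    have le2 : dist1 (x k.+1) (y k.+1) <= a k by apply: myk.
    have [lt|ge] := ltP (a k.+1) (dist1 (x k.+1) (y k.+1)).
      exact: lt_le_trans lt le2.
    exfalso; apply: (H' k.+1); split => //; split => // x' Xx'.
    exact: le_trans ge (mk1 x' Xx').
  have mono : forall i k, (i < k)%N -> a k < a i.
    move=> i; elim=> [|k IH]; first by rewrite ltn0.
    rewrite ltnS leq_eqVlt => /orP [/eqP <-|/IH h]; first exact: dec.
    exact: lt_trans (dec k) h.
  pose f := fun i : 'I_(#|{: Yvec I}|.+1) => y (val i).
  have finj : injective f.
    move=> i k e; apply: val_inj; rewrite /f in e.
    have := adet _ _ e.
    case: (ltngtP (val i) (val k)) => // h ea.
      by move: (mono _ _ h); rewrite ea ltxx.
    by move: (mono _ _ h); rewrite ea ltxx.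
  have := leq_card f finj; by rewrite card_ord ltnn.
have [K [PK HK]] := @least_nat (fun j => partial_min A b (x j) (y j)) j Pj.
exists K; split => //; split => // d0.
have [[XA XI] _] := PK.
split => // i iI.
pose ii : Ity I := exist _ i iI.
have : `|x K i 0 - (y K ii)%:R| = 0.
  move: d0; rewrite /dist1 => /eqP; rewrite psumr_eq0 => [/allP h|jj _] //.
    idtac.
    by apply/eqP; have := h ii (mem_index_enum _).
move/eqP; rewrite normr_eq0 subr_eq0 => /eqP ->.
by case: (y K ii); [right|left].
Qed.
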